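(* Let $E$ be a fixed-point equation system with interpretation $[\![E]\!]\colon\mathbb{E}(D)\to\mathbb{E}(D)$, and let $\eta'\in\mathbb{E}(D)$. Then $\eta'\le\mu[\![E]\!]$ holds if there exist: (a) a fixed-point equation system $E'$ over the same quantitative predicate variables such that $[\![E']\!]\le[\![E]\!]$ (i.e. $[\![E']\!](\eta)\le[\![E]\!](\eta)$ for all $\eta\in\mathbb{E}(D)$); (b) $u\in\mathbb{E}(D)$ with $[\![E']\!](u)\le u$; (c) a function $r\colon D\to[0,\infty)$ with $(\mathsf{D}[\![E']\!])(r)+u\le r$; and (d) $\eta'\le u$ together with $\eta'\le[\![E']\!](\eta')$.
   Context: $\mathbb{E}(D)$ is the set of functions $D\to[0,\infty]$ with pointwise order and operations ($\infty+x=\infty$, $0\cdot\infty=0$, $r\cdot\infty=\infty$ for $r>0$); for $x\ge y$ in $[0,\infty]$, $x-y$ is the least $z$ with $x=y+z$; $\mathbb{O}$ is the zero function; for a map $K$ on $\mathbb{E}(D)$, $(\mathsf{D}K)(\eta)=K(\eta)-K(\mathbb{O})$; $\mu K$ is the least fixed point. Quantitative formulas over quantitative predicate variables $X_1,\dots,X_n$ (with $X_j$ of type $D_j\to\Omega$) are given by $F ::= X_j(\tilde e)\mid t\mid F_1+F_2\mid t\cdot F\mid \mathbf{if}\ \varphi\ \mathbf{then}\ F_1\ \mathbf{else}\ F_2$, where $\tilde e$ are expressions (functions of the term variables) of the argument data types, $t$ is a term taking values in $[0,\infty)$, and $\varphi$ is a boolean expression. For $\eta=(\eta_1,\dots,\eta_n)$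 and a valuation $v$ of the term variables: $[\![X_j(e)]\!](\eta)(v)=\eta_j([\![e]\!](v))$, $[\![t]\!](\eta)(v)=[\![t]\!](v)$, sums and scalar products pointwise, and the conditional by cases on $[\![\varphi]\!](v)$. A fixed-point equation system is $E=\{X_i(\tilde x_i)=_\mu F_i\}_{i=1}^n$ with $\tilde x_i$ ranging over $D_i$ and $F_i$ having free term variables among $\tilde x_i$; with $D=\coprod_j D_j$ and $\prod_j\mathbb{E}(D_j)\cong\mathbb{E}(D)$, its interpretation is $[\![E]\!](\eta)=([\![F_1]\!](\eta),\dots,[\![F_n]\!](\eta))$. *)

(* Defs.v *)
From HB Require Import structures.
From mathcomp Require Import all_boot all_order all_algebra.
From mathcomp Require Import classical_sets reals constructive_ereal ereal.
Set Implicit Arguments. Unset Strict Implicit. Unset Printing Implicit Defensive.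
Import Order.TTheory GRing.Theory Num.Theory.
Local Open Scope ring_scope.
Local Open Scope ereal_scope.
Local Open Scope classical_set_scope.

Section QFP.
Variable R : realType.

(** Elements of E(D): functions D -> [0,oo], represented as functions into
    \bar R that are pointwise nonnegative. *)
Definition nonnegf (D : Type) (f : D -> \bar R) : Prop := forall d, 0 <= f d.

Definition leF (D : Type) (f g : D -> \bar R) : Prop := forall d, f d <= g d.

Definition zeroF (D : Type) : D -> \bar R := fun _ => 0.

(** truncated difference on [0,oo]: for x >= y, x - y is the least z with
    x = y + z  (so oo - oo = 0, oo - y = oo for finite y, and the usual
    difference for finite values). *)
Definition esubp (x y : \bar R) : \bar R := if y == +oo then 0 else x - y.

Definition Dop (D : Type) (K : (D -> \bar R) -> (D -> \bar R))
  (eta : D -> \bar R) : D -> \bar R :=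
  fun d => esubp (K eta d) (K (@zeroF D) d).

(** least fixed point of K on E(D): the pointwise infimum of all prefixed
    points in E(D) (Knaster--Tarski; this is the least fixed point of any
    monotone K on the complete lattice E(D)). *)
Definition mu (D : Type) (K : (D -> \bar R) -> (D -> \bar R)) : D -> \bar R :=
  fun d => ereal_inf [set x d | x in [set x | nonnegf x /\ leF (K x) x]].

(** Quantitative formulas over predicate variables X_1..X_n with X_j of type
    Dt j -> Omega, whose free term variables range over a valuation type V.
    Expressions, terms and boolean expressions are given by their semantics
    as functions of the valuation; terms take values in [0,oo). *)
Inductive qform (n : nat) (Dt : 'I_n -> Type) (V : Type) : Type :=
| QVar (j : 'I_n) (e : V -> Dt j)
| QTerm (t : V -> {nonneg R})
| QAdd (F1 F2 : qform Dt V)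
| QScale (t : V -> {nonneg R}) (F : qform Dt V)
| QIf (phi : V -> bool) (F1 F2 : qform Dt V).

Definition Dsum (n : nat) (Dt : 'I_n -> Type) : Type := {j : 'I_n & Dt j}.

Fixpoint qsem (n : nat) (Dt : 'I_n -> Type) (V : Type) (F : qform Dt V)
  (eta : Dsum Dt -> \bar R) (v : V) : \bar R :=
  match F with
  | QVar j e => eta (existT _ j (e v))
  | QTerm t => ((t v)%:num)%:E
  | QAdd F1 F2 => qsem F1 eta v + qsem F2 eta v
  | QScale t F => ((t v)%:num)%:E * qsem F eta v
  | QIf phi F1 F2 => if phi v then qsem F1 eta v else qsem F2 eta v
  end.

(** A fixed-point equation system {X_i(x_i) =mu F_i}_{i=1..n}: F_i has its
    free term variables among x_i, which range over Dt i. *)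
Definition eqsys (n : nat) (Dt : 'I_n -> Type) : Type :=
  forall i : 'I_n, qform Dt (Dt i).

Definition esem (n : nat) (Dt : 'I_n -> Type) (E : eqsys Dt)
  (eta : Dsum Dt -> \bar R) : Dsum Dt -> \bar R :=
  fun d => qsem (E (projT1 d)) eta (projT2 d).

End QFP.

(* Main.v *)
Require Import Defs.
From HB Require Import structures.
From mathcomp Require Import all_boot all_order all_algebra.
From mathcomp Require Import classical_sets reals constructive_ereal ereal.
From mathcomp Require Import ring lra.
Import Order.TTheory GRing.Theory Num.Theory.
Local Open Scope ring_scope.
Local Open Scope ereal_scope.

Set Implicit Arguments.
Section Lin.
Variables (R : realType) (n : nat) (Dt : 'I_n -> Type) (V : Type).

Fixpoint lin (F : qform R Dt V) (eta : Dsum Dt -> \bar R) (v : V) : \bar R :=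
  match F with
  | QVar j e => eta (existT _ j (e v))
  | QTerm t => 0
  | QAdd F1 F2 => lin F1 eta v + lin F2 eta v
  | QScale t F => ((t v)%:num)%:E * lin F eta v
  | QIf phi F1 F2 => if phi v then lin F1 eta v else lin F2 eta v
  end.

Fixpoint cst (F : qform R Dt V) (v : V) : R :=
  match F with
  | QVar j e => 0%R
  | QTerm t => (t v)%:num
  | QAdd F1 F2 => (cst F1 v + cst F2 v)%R
  | QScale t F => ((t v)%:num * cst F v)%R
  | QIf phi F1 F2 => if phi v then cst F1 v else cst F2 v
  end.

Lemma cst_ge0 (F : qform R Dt V) v : (0 <= cst F v)%R.
Proof.
elim: F v => [j e|t|F1 IH1 F2 IH2|t F IH|phi F1 IH1 F2 IH2] v /=.
- by [].
- by [].
- by rewrite addr_ge0.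
- by rewrite mulr_ge0.
- by case: (phi v).
Qed.

Lemma lin_ge0 (F : qform R Dt V) eta v : nonnegf eta -> 0 <= lin F eta v.
Proof.
move=> he; elim: F v => [j e|t|F1 IH1 F2 IH2|t F IH|phi F1 IH1 F2 IH2] v /=.
- exact: he.
- by [].
- by rewrite adde_ge0.
- by rewrite mule_ge0.
- by case: (phi v).
Qed.

Lemma qsem_dec (F : qform R Dt V) eta v : nonnegf eta ->
  qsem F eta v = (cst F v)%:E + lin F eta v.
Proof.
move=> he; elim: F v => [j e|t|F1 IH1 F2 IH2|t F IH|phi F1 IH1 F2 IH2] v /=.
- by rewrite add0e.
- by rewrite adde0.
- by rewrite IH1 IH2 EFinD addeACA.
- by rewrite IH ge0_muleDr ?lee_fin ?cst_ge0 ?lin_ge0 // EFinM.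
- by case: (phi v).
Qed.

Lemma lin_mono (F : qform R Dt V) a b v : leF a b -> lin F a v <= lin F b v.
Proof.
move=> hab; elim: F v => [j e|t|F1 IH1 F2 IH2|t F IH|phi F1 IH1 F2 IH2] v /=.
- exact: hab.
- by [].
- exact: leeD.
- by apply: lee_wpmul2l => //; rewrite lee_fin.
- by case: (phi v).
Qed.

Lemma lin_add (F : qform R Dt V) a b v : nonnegf a -> nonnegf b ->
  lin F (fun d => a d + b d) v = lin F a v + lin F b v.
Proof.
move=> ha hb; elim: F v => [j e|t|F1 IH1 F2 IH2|t F IH|phi F1 IH1 F2 IH2] v /=.
- by [].
- by rewrite adde0.
- by rewrite IH1 IH2 addeACA.
- by rewrite IH ge0_muleDr ?lin_ge0.
- by case: (phi v).
Qed.

Lemma lin_scale (F : qform R Dt V) (s : R) a v : nonnegf a -> (0 <= s)%R ->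
  lin F (fun d => s%:E * a d) v = s%:E * lin F a v.
Proof.
move=> ha hs; elim: F v => [j e|t|F1 IH1 F2 IH2|t F IH|phi F1 IH1 F2 IH2] v /=.
- by [].
- by rewrite mule0.
- by rewrite IH1 IH2 ge0_muleDr ?lin_ge0.
- by rewrite IH muleCA.
- by case: (phi v).
Qed.

Lemma lin_zero (F : qform R Dt V) v : lin F (@zeroF R _) v = 0.
Proof.
elim: F v => [j e|t|F1 IH1 F2 IH2|t F IH|phi F1 IH1 F2 IH2] v /=.
- by [].
- by [].
- by rewrite IH1 IH2 adde0.
- by rewrite IH mule0.
- by case: (phi v).
Qed.

Lemma lin_scaleR (F : qform R Dt V) (s : R) (a : Dsum Dt -> R) v :
  (forall d, 0 <= a d)%R -> (0 <= s)%R ->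
  lin F (fun d => (s * a d)%:E) v = s%:E * lin F (fun d => (a d)%:E) v.
Proof.
move=> ha hs.
have hn : nonnegf (fun d => (a d)%:E) by move=> d; rewrite lee_fin.
elim: F v => [j e|t|F1 IH1 F2 IH2|t F IH|phi F1 IH1 F2 IH2] v /=.
- by rewrite EFinM.
- by rewrite mule0.
- by rewrite IH1 IH2 ge0_muleDr ?lin_ge0.
- by rewrite IH muleCA.
- by case: (phi v).
Qed.

End Lin.

Lemma real_step (R : realType) (a e xd lr ud rd : R) : (0 < a)%R -> (0 <= xd)%R ->
  (e <= xd + a^-1 * lr)%R -> (lr + ud <= rd)%R -> (e <= ud)%R ->
  (e <= xd + (a + 1)^-1 * rd)%R.
Proof.
move=> ha hx h hl hu.
have h' : (a * e <= a * xd + lr)%R.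
  by have := ler_wpM2l (ltW ha) h; rewrite mulrDr mulrA mulfV ?gt_eqF // mul1r.
have hb : (0 < a + 1)%R by rewrite addr_gt0.
have -> : (xd + (a + 1)^-1 * rd = (a + 1)^-1 * ((a + 1) * xd + rd))%R.
  by rewrite mulrDr mulrA mulVf ?gt_eqF // mul1r.
rewrite ler_pdivlMl //.
rewrite !mulrDl !mul1r.
apply: (le_trans (lerD h' hu)); rewrite -addrA -[X in (_ <= X)%R]addrA lerD2l.
apply: (le_trans hl); by rewrite lerDr.
Qed.

Lemma real_lim (R : realType) (e xd rd : R) :
  (forall k : nat, e <= xd + (k.+1%:R)^-1 * rd)%R -> (e <= xd)%R.
Proof.
move=> h; rewrite leNgt; apply/negP => hlt.
have hpos : (0 < e - xd)%R by rewrite subr_gt0.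
pose k := Num.truncn (rd / (e - xd)).
have hk := truncnS_gt (rd / (e - xd)).
rewrite -/k ltr_pdivrMr // in hk.
have hk1 : (0 < k.+1%:R :> R)%R by rewrite ltr0n.
have H2 : ((k.+1%:R)^-1 * rd < e - xd)%R by rewrite ltr_pdivrMl // mulrC.
rewrite ltrBrDl in H2.
by have := lt_le_trans H2 (h k); rewrite ltxx.
Qed.

Unset Implicit Arguments.
Theorem theorem4p1 (R : realType) (n : nat) (Dt : 'I_n -> Type)
  (E : eqsys R Dt) (eta' : Dsum Dt -> \bar R) (heta' : nonnegf eta') :
  (exists E' : eqsys R Dt,
     (forall eta, nonnegf eta -> leF (esem E' eta) (esem E eta)) /\
     exists u : Dsum Dt -> \bar R, nonnegf u /\ leF (esem E' u) u /\
     exists r : Dsum Dt -> R, (forall d, (0 <= r d)%R) /\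
       leF (fun d => Dop (esem E') (fun d' => (r d')%:E) d + u d)
           (fun d => (r d)%:E) /\
       leF eta' u /\ leF eta' (esem E' eta')) ->
  leF eta' (mu (esem E)).
Proof.
move=> [E' [hle [u [hu [hEu [r [hr [hc [heu hee]]]]]]]]] d0.
rewrite /mu; apply/ereal_infP => _ [x [hx hEx] <-].
pose L eta d := lin (E' (projT1 d)) eta (projT2 d).
pose C d := cst (E' (projT1 d)) (projT2 d).
pose r' := fun d => (r d)%:E.
have hr' : nonnegf r' by move=> d; rewrite /r' lee_fin.
have hdec : forall eta, nonnegf eta -> forall d, esem E' eta d = (C d)%:E + L eta d.
  by move=> eta he d; rewrite /esem qsem_dec.
have hLr : forall d, L r' d + u d <= r' d.
  move=> d; have h0 : nonnegf (@zeroF R (Dsum Dt)) by move=> ?; rewrite /zeroF.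
  have := hc d; rewrite /Dop (hdec _ hr') (hdec _ h0).
  rewrite /L lin_zero adde0 /esubp.
  case: eqP => [//|_].
  by rewrite (addeC (C d)%:E) addeK.
have hLr0 : forall d, 0 <= L r' d by move=> d; apply: lin_ge0.
have hur : forall d, u d <= r' d.
  by move=> d; apply: le_trans (hLr d); rewrite leeDr.
have hfin : forall (y : \bar R) d, 0 <= y -> y <= r' d -> exists t : R, y = t%:E.
  move=> y d; case: y => [t| |] h1 h2; [by exists t | by rewrite /r' leye_eq in h2 | by []].
have claim : forall k : nat, leF eta' (fun d => x d + ((k.+1%:R)^-1 * r d)%:E).
  elim=> [|k IH] d.
  - rewrite invr1 mul1r; apply: le_trans (heu d) _; apply: le_trans (hur d) _.
    by rewrite leeDr.
  - have [[xd hxd]|hxd] : (exists xd : R, x d = xd%:E) \/ x d = +oo.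
      by case: (x d) (hx d) => [t| |] _ //; [left; exists t|right].
      2: by rewrite hxd leey.
      have [e he] := hfin _ d (heta' d) (le_trans (heu d) (hur d)).
      have [ud hud] := hfin _ d (hu d) (hur d).
      have [lr hlr] := hfin _ d (hLr0 d) (le_trans (leeDl _ (hu d)) (hLr d)).
      have h1 : eta' d <= x d + ((k.+1%:R)^-1)%:E * L r' d.
        apply: le_trans (hee d) _; rewrite hdec //.
        have hs : (0 <= (k.+1%:R)^-1 :> R)%R by rewrite invr_ge0 ler0n.
        apply: le_trans (leeD2l _ (lin_mono _ _ IH)) _.
        rewrite lin_add //; last by move=> ?; rewrite lee_fin mulr_ge0.
        rewrite lin_scaleR // addeA -/(L x d) -hdec //.
        apply: leeD2r; apply: le_trans (hEx d); exact: hle.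
      have hl := hLr d.
      rewrite hxd he hlr -EFinM -EFinD lee_fin in h1.
      rewrite hlr hud /r' -EFinD lee_fin in hl.
      have hu' := heu d; rewrite he hud lee_fin in hu'.
      have hx' := hx d; rewrite hxd lee_fin in hx'.
      rewrite hxd he -EFinD lee_fin -natr1.
      by apply: (@real_step R _ _ _ _ _ _ _ hx' h1 hl hu'); rewrite ltr0n.
have [[xd hxd]|hxd] : (exists xd : R, x d0 = xd%:E) \/ x d0 = +oo.
  by case: (x d0) (hx d0) => [t| |] _ //; [left; exists t|right].
  2: by rewrite hxd leey.
  have [e he] := hfin _ d0 (heta' d0) (le_trans (heu d0) (hur d0)).
  rewrite hxd he lee_fin; apply: real_lim (r d0) _ => k.
  by have := claim k d0; rewrite hxd he -EFinD lee_fin.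
Qed.
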